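(* Let $\theta,\theta_1>0$ and let $D_n=\lambda^{-1}\sum_{j=0}^{n-1}\big(-N+\sum_{i=1}^MN_i(t_j-h_i)\big)$. Assume that for all $i=1,\dots,M$ and all $0<n\le n_T$, $$\Big|\lambda^{-1}\sum_{j=-n_i}^{0\wedge(n-n_i)}(N_i(t_j)-p_iN)\Big|<\theta_1 .$$ Then $$\mathbb{P}\Big(\sup_{0<n\le n_T}|D_n|\ge M\theta+M\theta_1\Big)\le 2M\exp\Big(-\frac{\theta^2}{32T\epsilon}\Big).$$
   Context: Fix $\epsilon>0$, an integer $N\ge1$, $\lambda:=N/\epsilon$, $t_n:=n\epsilon$, $T>0$ with $n_T:=T\epsilon^{-1}$ an integer. Fix $M\ge1$, positive reals $h_1<\dots<h_M$ each an integer multiple of $\epsilon$, $n_i:=h_i/\epsilon$, and probabilities $p_1,\dots,p_M>0$ summing to $1$. At each time $t_n$ exactly $N$ vertices arrive, each independently of Type $i$ with probability $p_i$; $N_i(t_n)$ is the number of Type $i$ arrivals at $t_n$, so for $n\ge0$ the vectors $(N_1(t_n),\dots,N_M(t_n))$ are independent multinomial$(N;p_1,\dots,p_M)$ (in particular $N_i(t_n)\sim\mathrm{Binomial}(N,p_i)$, $\sum_iN_i(t_n)=N$). For $n<0$ the values $N_i(t_n)$ are given initial data. *)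

(* Defs.v *)
From HB Require Import structures.
From mathcomp Require Import all_boot all_order all_algebra.
From mathcomp Require Import reals.
From mathcomp Require Import sequences exp.
Set Implicit Arguments. Unset Strict Implicit. Unset Printing Implicit Defensive.
Import Order.TTheory GRing.Theory Num.Theory.
Local Open Scope ring_scope.

(* Sample space: for each time index j in {0,...,nT-1} and each of the N
   arrivals k at time t_j, the type (in 'I_M, i.e. types 1..M shifted to
   0..M-1) of that arrival.  Only arrivals at times t_0..t_{nT-1} can
   influence D_n for n <= nT. *)
Definition outcome (M N nT : nat) := {ffun 'I_nT -> {ffun 'I_N -> 'I_M}}.

Definition prob_outcome (R : realType) (M N nT : nat) (p : 'I_M -> R)
  (w : outcome M N nT) : R :=
  \prod_(j < nT) \prod_(k < N) p (w j k).

(* N_i(t_n): number of type-i arrivals at time t_n.  For n < 0 it is the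
   given initial data; for 0 <= n < nT it is read off the outcome; times
   n >= nT are never used (value 0). *)
Definition Ncount (M N nT : nat) (init : 'I_M -> int -> nat)
  (w : outcome M N nT) (i : 'I_M) (n : int) : nat :=
  match n with
  | Negz _ => init i n
  | Posz m =>
      match (insub m : option 'I_nT) with
      | Some j => #|[pred k : 'I_N | w j k == i]|
      | None => 0%N
      end
  end.

Definition lam (R : realType) (eps : R) (N : nat) : R := N%:R / eps.

(* D_n = lambda^{-1} sum_{j=0}^{n-1} ( -N + sum_i N_i(t_j - h_i) ),
   with t_j - h_i = t_{j - n_i}. *)
Definition Dn (R : realType) (eps : R) (M N nT : nat) (nn : 'I_M -> nat)
  (init : 'I_M -> int -> nat) (w : outcome M N nT) (n : nat) : R :=
  (lam eps N)^-1 * \sum_(0 <= j < n)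
     (- (N%:R) + \sum_(i < M) (Ncount init w i (j%:Z - (nn i)%:Z))%:R).

(* lambda^{-1} sum_{j=-n_i}^{0 /\ (n - n_i)} (N_i(t_j) - p_i N),
   reindexed by k = j + n_i, k = 0 .. min(n_i, n). *)
Definition initSum (R : realType) (eps : R) (M N nT : nat) (nn : 'I_M -> nat)
  (p : 'I_M -> R) (init : 'I_M -> int -> nat) (w : outcome M N nT)
  (i : 'I_M) (n : nat) : R :=
  (lam eps N)^-1 * \sum_(0 <= k < (minn (nn i) n).+1)
     ((Ncount init w i (k%:Z - (nn i)%:Z))%:R - p i * N%:R).

(* Main.v *)
Require Import Defs.
From HB Require Import structures.
From mathcomp Require Import all_boot all_order all_algebra.
From mathcomp Require Import reals.
From mathcomp Require Import sequences exp.
Import Order.TTheory GRing.Theory Num.Theory.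
Local Open Scope ring_scope.
From mathcomp Require Import ring lra.
Set Implicit Arguments. Unset Strict Implicit. Unset Printing Implicit Defensive.
Section Max.
Variables (R : realType) (A : finType) (q : A -> R).
Hypothesis q0 : forall a, 0 <= q a.
Hypothesis q1 : \sum_a q a = 1.

Definition fcons K (b : A) (w : {ffun 'I_K -> A}) : {ffun 'I_K.+1 -> A} :=
  [ffun j => if unlift ord0 j is Some j' then w j' else b].
Definition ftail K (w : {ffun 'I_K.+1 -> A}) : {ffun 'I_K -> A} :=
  [ffun j => w (lift ord0 j)].

Lemma sum_ffunS K (F : {ffun 'I_K.+1 -> A} -> R) :
  \sum_w F w = \sum_b \sum_(w : {ffun 'I_K -> A}) F (fcons b w).
Proof.
rewrite pair_bigA /=.
rewrite (reindex (fun x : A * {ffun 'I_K -> A} => fcons x.1 x.2)) //=.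
exists (fun w : {ffun 'I_K.+1 -> A} => (w ord0, ftail w)) => [[b w] _|w _] /=.
  congr pair; first by rewrite /fcons ffunE unlift_none.
  by apply/ffunP => j; rewrite /ftail /fcons !ffunE liftK.
apply/ffunP => j; rewrite /fcons ffunE.
case: unliftP => [j'|] -> //; by rewrite /ftail ffunE.
Qed.

Definition wt K (w : {ffun 'I_K -> A}) := \prod_j q (w j).

Lemma wt_total K : \sum_(w : {ffun 'I_K -> A}) wt w = 1.
Proof.
rewrite /wt -(bigA_distr_bigA (fun (j : 'I_K) (b : A) => q b)) /=.
by rewrite big1 // => j _; rewrite q1.
Qed.

Lemma wt_ge0 K (w : {ffun 'I_K -> A}) : 0 <= wt w.
Proof. by apply: prodr_ge0 => j _. Qed.

Lemma wt_fcons K b (w : {ffun 'I_K -> A}) : wt (fcons b w) = q b * wt w.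
Proof.
rewrite /wt big_ord_recl /fcons ffunE unlift_none; congr (_ * _).
by apply: congr_big => // j _; rewrite ffunE liftK.
Qed.

Variables (D : A -> R) (s phi : R).
Hypothesis s0 : 0 <= s.
Hypothesis phi1 : 1 <= phi.
Hypothesis hmgf : \sum_a q a * expR (s * D a) <= phi.

Definition Ssum K (w : {ffun 'I_K -> A}) (m : nat) :=
  \sum_(j < K | (j < m)%N) D (w j).

Lemma Ssum_fcons K b (w : {ffun 'I_K -> A}) m :
  Ssum (fcons b w) m.+1 = D b + Ssum w m.
Proof.
rewrite /Ssum big_mkcond big_ord_recl /= /fcons ffunE unlift_none.
congr (_ + _); rewrite [RHS]big_mkcond; apply: eq_bigr => j _.
by rewrite ffunE liftK /bump /= add1n ltnS.
Qed.

Lemma Ssum0 K (w : {ffun 'I_K -> A}) : Ssum w 0 = 0.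
Proof. by rewrite /Ssum big_pred0. Qed.

Lemma max_ineq K : forall x a : R,
  \sum_(w : {ffun 'I_K -> A} | [exists m : 'I_K.+1, a <= x + Ssum w m]) wt w
    <= expR (s * (x - a)) * phi ^+ K.
Proof.
elim: K => [|K IH] x a.
  have [ax|xa] := lerP a x.
    apply: (le_trans (y := 1)).
      rewrite -(wt_total 0); rewrite [X in _ <= X](bigID [pred w | [exists m : 'I_1, a <= x + Ssum w m]]) /=.
      rewrite lerDl; apply: sumr_ge0 => w _; exact: wt_ge0.
    rewrite expr0 mulr1 -expR0 ler_expR; apply: mulr_ge0 => //; lra.
  rewrite big_pred0; first by rewrite mulr_ge0 ?expR_ge0 // exprn_ge0 // (le_trans ler01 phi1).
  move=> w /=; apply/existsP => -[m]; rewrite ord1 Ssum0 addr0.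
  by rewrite leNgt xa.
have [ax|xa] := lerP a x.
  apply: (le_trans (y := 1)).
    rewrite -(wt_total K.+1); rewrite [X in _ <= X](bigID [pred w | [exists m : 'I_K.+2, a <= x + Ssum w m]]) /=.
    rewrite lerDl; apply: sumr_ge0 => w _; exact: wt_ge0.
  apply: mulr_ege1; last by apply: exprn_ege1.
  rewrite -expR0 ler_expR; apply: mulr_ge0 => //; lra.
rewrite big_mkcond sum_ffunS /=.
apply: (le_trans (y := \sum_b q b * (expR (s * (x + D b - a)) * phi ^+ K))).
  apply ler_sum => b _.
  apply: (le_trans _ (ler_wpM2l (q0 b) (IH (x + D b) a))).
  rewrite mulr_sumr [X in _ <= X]big_mkcond /=; apply: ler_sum => w _.
  have -> : [exists m : 'I_K.+2, a <= x + Ssum (fcons b w) m] =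
            [exists m : 'I_K.+1, a <= x + D b + Ssum w m].
    apply/existsP/existsP => -[m Hm].
      case: m Hm => -[|m] Hm /=.
        by rewrite Ssum0 addr0 leNgt xa.
      rewrite Ssum_fcons addrA => H.
      by exists (Ordinal (Hm : (m < K.+1)%N)).
    have Hm' : (m.+1 < K.+2)%N by rewrite ltnS ltn_ord.
    exists (Ordinal Hm') => /=.
    by rewrite Ssum_fcons addrA.
  by case: ifP => _; rewrite ?wt_fcons ?mulr0.
rewrite exprS.
have -> : \sum_b q b * (expR (s * (x + D b - a)) * phi ^+ K) =
   expR (s * (x - a)) * phi ^+ K * \sum_b q b * expR (s * D b).
  rewrite mulr_sumr; apply: eq_bigr => b _.
  have -> : s * (x + D b - a) = s * (x - a) + s * D b by ring.
  by rewrite expRD; ring.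
rewrite [phi * _]mulrC mulrA; apply: ler_wpM2l; last exact: hmgf.
by rewrite mulr_ge0 ?expR_ge0 // exprn_ge0 // (le_trans ler01 phi1).
Qed.
End Max.
Lemma expR_quad (R : realType) (x : R) : -1/4 <= x -> x <= 1/4 ->
  expR x <= 1 + x + 2 * x ^+ 2.
Proof.
move=> h1 h2.
have h3 := expR_ge1Dx (- x).
have h4 : expR x * expR (- x) = 1 by rewrite -expRD subrr expR0.
have h5 := expR_gt0 x.
have h6 : expR x * (1 - x) <= 1.
  rewrite -[X in _ <= X]h4; apply: ler_wpM2l; first exact: ltW.
  exact: h3.
nra.
Qed.

Section Mgf.
Variables (R : realType) (M N : nat) (p : 'I_M -> R) (i : 'I_M).
Hypothesis p0 : forall j, 0 < p j.
Hypothesis p1 : \sum_j p j = 1.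

Definition ycoef (c : 'I_M) : R := (c == i)%:R - p i.
Definition Delta (b : {ffun 'I_N -> 'I_M}) : R :=
  (#|[pred k | b k == i]|)%:R - p i * N%:R.

Lemma pi_le1 : p i <= 1.
Proof.
rewrite -p1 (bigD1 i) //= lerDl; apply: sumr_ge0 => j _; exact: ltW.
Qed.

Lemma Delta_sum b : Delta b = \sum_k ycoef (b k).
Proof.
rewrite /Delta /ycoef sumrB sumr_const card_ord mulr_natr; congr (_ - _).
rewrite -sum1_card natr_sum big_mkcond /=; apply: eq_bigr => k _.
by rewrite inE; case: (b k == i).
Qed.

Lemma sum_py : \sum_c p c * ycoef c = 0.
Proof.
rewrite /ycoef; under eq_bigr => c _ do rewrite mulrBr.
rewrite sumrB -mulr_suml p1 mul1r (bigD1 i) //= eqxx mulr1 big1 ?addr0 ?subrr //.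
by move=> c /negbTE ->; rewrite mulr0.
Qed.

Lemma mgf1 s : -1/4 <= s -> s <= 1/4 ->
  \sum_c p c * expR (s * ycoef c) <= expR (2 * s ^+ 2).
Proof.
move=> hs1 hs2.
apply: (le_trans (y := \sum_c p c * (1 + s * ycoef c + 2 * s ^+ 2))).
  apply: ler_sum => c _; apply: ler_wpM2l; first exact: ltW.
  have hp := p0 i; have hp1 := pi_le1.
  have hy1 : -1 <= ycoef c by rewrite /ycoef; case: (c == i) => /=; lra.
  have hy2 : ycoef c <= 1 by rewrite /ycoef; case: (c == i) => /=; lra.
  set y := ycoef c in hy1 hy2 *.
  apply: (le_trans (expR_quad _ _)); [nra|nra|].
  have hy : y ^+ 2 <= 1 by nra.
  have hs : 0 <= s ^+ 2 by exact: sqr_ge0.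
  have := ler_wpM2l hs hy; rewrite mulr1 exprMn; lra.
rewrite (eq_bigr (fun c => p c + s * (p c * ycoef c) + 2 * s ^+ 2 * p c)); last first.
  by move=> c _; ring.
rewrite !big_split /= -!mulr_sumr sum_py p1 mulr0 addr0 mulr1.
have := expR_ge1Dx (2 * s ^+ 2); lra.
Qed.

Lemma mgfN s : -1/4 <= s -> s <= 1/4 ->
  \sum_(b : {ffun 'I_N -> 'I_M}) (\prod_k p (b k)) * expR (s * Delta b)
    <= expR (2 * s ^+ 2 * N%:R).
Proof.
move=> hs1 hs2.
have -> : \sum_(b : {ffun 'I_N -> 'I_M}) (\prod_k p (b k)) * expR (s * Delta b)
   = \prod_(k < N) \sum_c p c * expR (s * ycoef c).
  rewrite (bigA_distr_bigA (fun (k : 'I_N) (c : 'I_M) => p c * expR (s * ycoef c))) /=.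
  apply: eq_bigr => b _; rewrite Delta_sum mulr_sumr expR_sum -big_split /=.
  done.
rewrite mulrC expRM_natl -[X in _ <= expR _ ^+ X]card_ord -prodr_const; apply: ler_prod => k _.
rewrite sumr_ge0 /=; last by move=> c _; rewrite mulr_ge0 ?expR_ge0 // ltW.
exact: mgf1.
Qed.
End Mgf.
Lemma normB (R : realType) (x : R) : - `|x| <= x /\ x <= `|x|.
Proof. by have := lexx `|x|; rewrite ler_norml => /andP. Qed.

Lemma seq_bound (R : realType) (f : nat -> R) (ni n : nat) (c N' : R) :
 (0 < ni)%N -> (0 < n)%N ->
 (forall m, (0 < m <= n)%N -> `|\sum_(0 <= k < (minn ni m).+1) f k| < c) ->
 (forall k, -N' <= f k) ->
 (forall k, (ni <= k)%N -> `|f k| <= N') ->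
 `|\sum_(0 <= k < n) f k| <= c + N' + `|\sum_(ni <= k < n) f k|.
Proof.
move=> hni hn H1 H2 H3.
have hN' : 0 <= N' := le_trans (normr_ge0 _) (H3 ni (leqnn ni)).
case: (leqP n ni) => hnn.
  rewrite [\sum_(ni <= k < n) _]big_geq // normr0 addr0.
  case: n hn hnn H1 => [//|[|n]] _ hnn H1.
    have := H1 1%N isT; rewrite (minn_idPr hni) !big_nat_recr //= !big_geq // !add0r.
    have := H2 0%N; have := H2 1%N => a b.
    rewrite ltr_norml ler_norml => /andP [h1 h2].
    have c0 : 0 <= c by lra.
    apply/andP; split; lra.
  have := H1 n.+1; rewrite (minn_idPr (ltnW hnn)) => /(_ (leqnSn _)) h.
  apply: ltW; apply: (lt_le_trans h); by rewrite lerDl.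
have := H1 n; rewrite (minn_idPl (ltnW hnn)) => /(_ (andb_true_intro (conj hn (leqnn n)))).
rewrite (big_ltn hnn) [\sum_(0 <= k < n) f k](big_cat_nat (n := ni.+1)) //=.
set X := \sum_(0 <= k < ni.+1) f k.
set Z := \sum_(ni.+1 <= k < n) f k.
have := H3 ni (leqnn _) => /[dup] h0; rewrite ler_norml => /andP [h3 h4].
rewrite ltr_norml => /andP [h1 h2].
have [h5 h6] := normB (f ni + Z).
rewrite ler_norml; apply/andP; split; lra.
Qed.
Definition fseq (R : realType) (M N nT : nat) (nn : 'I_M -> nat)
  (p : 'I_M -> R) (init : 'I_M -> int -> nat) (w : outcome M N nT)
  (i : 'I_M) (k : nat) : R :=
  (Ncount init w i (k%:Z - (nn i)%:Z))%:R - p i * N%:R.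

Lemma Dn_split (R : realType) (eps : R) M N nT nn p init (w : outcome M N nT) n :
  \sum_(i < M) p i = 1 ->
  Dn eps nn init w n = (lam eps N)^-1 * \sum_(i < M) \sum_(0 <= k < n) fseq nn p init w i k.
Proof.
move=> hp1; rewrite /Dn; congr (_ * _); rewrite exchange_big; apply: eq_bigr => j _.
rewrite /fseq sumrB -mulr_suml hp1 mul1r addrC //.
Qed.

Lemma Ncount_pos M N nT init (w : outcome M N nT) i (j : 'I_nT) :
  Ncount init w i (Posz j) = #|[pred k | w j k == i]|.
Proof. by rewrite /Ncount valK. Qed.

Lemma Ncount_le M N nT init (w : outcome M N nT) i (m : nat) :
  (Ncount init w i (Posz m) <= N)%N.
Proof.
rewrite /Ncount; case: insubP => [j _ _|_] //.
by apply: leq_trans (max_card _) _; rewrite card_ord.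
Qed.

Lemma link (R : realType) M N nT nn (p : 'I_M -> R) init (w : outcome M N nT) i n :
  (n <= nT)%N ->
  \sum_(nn i <= k < n) fseq nn p init w i k = Ssum (Delta (N:=N) p i) w (n - nn i).
Proof.
move=> hn; rewrite -{1}(add0n (nn i)) big_addn big_mkord.
rewrite (@big_ord_widen R 0 +%R (n - nn i) nT (fun k => fseq nn p init w i (k + nn i))); last first.
  by apply: leq_trans (leq_subr _ _) hn.
rewrite /Ssum; apply: eq_bigr => j _.
rewrite /fseq PoszD addrK Ncount_pos /Delta //.
Qed.

Lemma f_lower (R : realType) M N nT nn (p : 'I_M -> R) init (w : outcome M N nT) i k :
  p i <= 1 -> - (N%:R) <= fseq nn p init w i k.
Proof.
move=> hp; rewrite /fseq.
have h0 : 0 <= (Ncount init w i (k%:Z - (nn i)%:Z))%:R :> R by apply: ler0n.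
have h1 : 0 <= N%:R :> R by apply: ler0n.
nra.
Qed.

Lemma f_abs (R : realType) M N nT nn (p : 'I_M -> R) init (w : outcome M N nT) i k :
  0 <= p i -> p i <= 1 -> (nn i <= k)%N -> `|fseq nn p init w i k| <= N%:R.
Proof.
move=> hp0 hp hk; rewrite ler_norml f_lower // andTb /fseq.
rewrite subzn //.
have h0 : (Ncount init w i (k - nn i)%N%:Z)%:R <= N%:R :> R by rewrite ler_nat Ncount_le.
have h1 : 0 <= N%:R :> R by apply: ler0n.
nra.
Qed.

Lemma sub_le (R : realType) (I : finType) (P : pred I) (F : I -> R) :
  (forall i, 0 <= F i) -> \sum_(i | P i) F i <= \sum_i F i.
Proof.
move=> hF; rewrite [X in _ <= X](bigID P) /= lerDl; apply: sumr_ge0 => i _; exact: hF.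
Qed.

Lemma union_le (R : realType) (I J : finType) (P : pred I) (E1 E2 : J -> pred I)
  (F : I -> R) :
  (forall i, 0 <= F i) ->
  (forall i, P i -> [exists j, E1 j i || E2 j i]) ->
  \sum_(i | P i) F i <= \sum_j (\sum_(i | E1 j i) F i + \sum_(i | E2 j i) F i).
Proof.
move=> hF hP.
apply: (le_trans (y := \sum_(i | P i) \sum_j (((E1 j i)%:R + (E2 j i)%:R) * F i))).
  apply: ler_sum => i /hP /existsP [j0 hj0].
  rewrite (bigD1 j0) //=.
  have h1 : F i <= ((E1 j0 i)%:R + (E2 j0 i)%:R) * F i.
    move: hj0; case: (E1 j0 i); case: (E2 j0 i) => //= _; rewrite ?add0r ?addr0 ?mul1r //.
    by rewrite -[X in X <= _]mul1r ler_wpM2r // lerDl.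
  apply: (le_trans h1); rewrite lerDl; apply: sumr_ge0 => j _.
  by apply: mulr_ge0 => //; apply: addr_ge0; apply: ler0n.
apply: (le_trans (y := \sum_i \sum_j (((E1 j i)%:R + (E2 j i)%:R) * F i))).
  apply: sub_le => i; apply: sumr_ge0 => j _; apply: mulr_ge0 => //; apply: addr_ge0; apply: ler0n.
rewrite exchange_big /=; apply: ler_sum => j _.
rewrite !(big_mkcond (E1 j)) !(big_mkcond (E2 j)) -big_split /=.
apply: ler_sum => i _; rewrite mulrDl.
by case: (E1 j i); case: (E2 j i); rewrite /= ?mul1r ?mul0r.
Qed.

Unset Implicit Arguments.

Theorem lemma8p2 (R : realType) (eps : R) (N M nT : nat) (nn : 'I_M -> nat)
  (p : 'I_M -> R) (init : 'I_M -> int -> nat) (theta theta1 : R) :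
  0 < eps -> (0 < N)%N -> (0 < M)%N -> (0 < nT)%N ->
  (forall i, (0 < nn i)%N) ->
  (forall i j : 'I_M, (i < j)%N -> (nn i < nn j)%N) ->
  (forall i, 0 < p i) -> \sum_(i < M) p i = 1 ->
  0 < theta -> 0 < theta1 ->
  (forall (w : outcome M N nT) (i : 'I_M) (n : nat), (0 < n <= nT)%N ->
      `| initSum eps nn p init w i n | < theta1) ->
  \sum_(w : outcome M N nT |
          [exists n : 'I_nT.+1,
             (0 < (n : nat))%N &&
             (M%:R * theta + M%:R * theta1 <= `| Dn eps nn init w n |)])
     prob_outcome p w
  <= 2 * M%:R * expR (- (theta ^+ 2) / (32 * (nT%:R * eps) * eps)).
Proof.
move=> he hN hM hnT hnn _ hp hp1 hth hth1 Hinit.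
pose q := fun b : {ffun 'I_N -> 'I_M} => \prod_k p (b k).
have q0 : forall b, 0 <= q b by move=> b; apply: prodr_ge0 => k _; exact: ltW.
have q1 : \sum_b q b = 1.
  rewrite /q -(bigA_distr_bigA (fun (k : 'I_N) (c : 'I_M) => p c)) /=.
  by rewrite big1 // => k _; rewrite hp1.
have hpi1 : forall i, p i <= 1 by move=> i; apply: pi_le1.
set B := expR (- (theta ^+ 2) / (32 * (nT%:R * eps) * eps)).
have hnT1 : 1 <= nT%:R :> R by rewrite ler1n.
have hN1 : 1 <= N%:R :> R by rewrite ler1n.
have hM1 : 1 <= M%:R :> R by rewrite ler1n.
have LHS1 : \sum_(w : outcome M N nT |
          [exists n : 'I_nT.+1,
             (0 < (n : nat))%N &&
             (M%:R * theta + M%:R * theta1 <= `| Dn eps nn init w n |)])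
     prob_outcome p w <= 1.
  rewrite -(wt_total q1 nT); apply: sub_le => w; by apply: prodr_ge0 => j _; apply: prodr_ge0 => k _; exact: ltW.
case: (ltrP theta (2 * eps)) => hte.
  apply: (le_trans LHS1).
  have hx : theta ^+ 2 / (32 * (nT%:R * eps) * eps) <= 1/8.
    rewrite ler_pdivrMr; last by rewrite !mulr_gt0 // ltr0n.
    nra.
  have hB : 7/8 <= B.
    apply: le_trans (expR_ge1Dx _); rewrite mulNr; lra.
  nra.
pose L := lam eps N.
have hL0 : 0 < L by rewrite /L /lam divr_gt0 // ltr0n.
pose a := L * theta - N%:R.
have haeps : a * eps = N%:R * theta - N%:R * eps.
  rewrite /a /L /lam; field; exact: lt0r_neq0.
have ha0 : 0 < a by nra.
pose S := fun (i : 'I_M) (w : outcome M N nT) (m : nat) => Ssum (Delta (N:=N) p i) w m.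
have Hdet : forall w : outcome M N nT,
  [exists n : 'I_nT.+1, (0 < (n : nat))%N &&
      (M%:R * theta + M%:R * theta1 <= `| Dn eps nn init w n |)] ->
  [exists i : 'I_M,
     [exists m : 'I_nT.+1, a <= 0 + Ssum (Delta (N:=N) p i) w m] ||
     [exists m : 'I_nT.+1, a <= 0 + Ssum (fun b => - Delta (N:=N) p i b) w m]].
  move=> w /existsP [n /andP [n0 hD]].
  have hn : (n <= nT)%N by rewrite -ltnS ltn_ord.
  have hper : forall i, `|\sum_(0 <= k < n) fseq nn p init w i k| <=
                         L * theta1 + N%:R + `|S i w (n - nn i)%N|.
    move=> i; rewrite /S -(link nn p init) //; apply: seq_bound => //.
    - move=> m /andP [m0 mn]; have := Hinit w i m; rewrite m0 (leq_trans mn hn) => /(_ isT).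
      rewrite /initSum normrM ger0_norm ?invr_ge0 ?(ltW hL0) // ltr_pdivrMl //.
    - by move=> k; apply: f_lower.
    - by move=> k hk; apply: f_abs => //; exact: ltW.
  case: (boolP [exists i : 'I_M, a <= `|S i w (n - nn i)%N|]) => [/existsP [i hi]|hnone].
    apply/existsP; exists i.
    have hm : ((n - nn i)%N < nT.+1)%N by rewrite ltnS (leq_trans (leq_subr _ _) hn).
    move: hi; rewrite ler_normr => /orP [h|h].
      by apply/orP; left; apply/existsP; exists (Ordinal hm); rewrite add0r.
    apply/orP; right; apply/existsP; exists (Ordinal hm); rewrite add0r /Ssum sumrN.
    exact: h.
  exfalso.
  have hlt : forall i, `|S i w (n - nn i)%N| < a.
    move=> i; rewrite ltNge; apply: contra hnone => h; apply/existsP; by exists i.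
  move: hD; rewrite (@Dn_split R eps M N nT nn p init w n hp1) normrM ger0_norm ?invr_ge0 ?(ltW hL0) //.
  rewrite -/L ler_pdivlMl //.
  have h1 : `|\sum_(i < M) \sum_(0 <= k < n) fseq nn p init w i k| <=
            \sum_(i < M) (L * theta1 + N%:R + `|S i w (n - nn i)%N|).
    apply: le_trans (ler_norm_sum _ _ _) _; apply: ler_sum => i _; exact: hper i.
  have h2 : \sum_(i < M) (L * theta1 + N%:R + `|S i w (n - nn i)%N|) <
            \sum_(i < M) (L * theta1 + N%:R + a).
    apply: ltr_sum; last by move=> i _; rewrite ltrD2l.
    by apply/hasP; exists (Ordinal hM); rewrite ?mem_index_enum.
  move: h2; rewrite sumr_const card_ord -(mulr_natl (L * theta1 + N%:R + a) M) => h2 h3.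
  have h4 := le_lt_trans (le_trans h3 h1) h2.
  move: h4; rewrite /a; nra.
have Hev : forall D : {ffun 'I_N -> 'I_M} -> R,
    (forall b, D b <= N%:R) ->
    (forall s, 0 <= s -> s <= 1/4 ->
       \sum_b q b * expR (s * D b) <= expR (2 * s ^+ 2 * N%:R)) ->
    \sum_(w : outcome M N nT | [exists m : 'I_nT.+1, a <= 0 + Ssum D w m]) wt q w <= B.
  move=> D hD hmg.
  pose K := nT%:R * N%:R : R.
  have hK0 : 0 < K by rewrite /K mulr_gt0 // ltr0n.
  case: (ltrP K a) => hKa.
    rewrite big_pred0 ?expR_ge0 // => w; apply/negbTE/negP => /existsP [m]; rewrite add0r.
    have : Ssum D w m <= K.
      rewrite /Ssum; apply: (le_trans (y := \sum_(j < nT | (j < m)%N) N%:R)).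
        by apply: ler_sum => j _; apply: hD.
      apply: (le_trans (y := \sum_(j < nT) N%:R)); first by apply: sub_le => j /=; rewrite ler0n.
      by rewrite sumr_const card_ord /K mulr_natl.
    lra.
  pose s := a / (4 * K).
  have s0 : 0 <= s by rewrite /s divr_ge0 // ?(ltW ha0) // mulr_ge0 // ltW.
  have s4 : s <= 1/4.
    rewrite /s ler_pdivrMr; last by rewrite mulr_gt0.
    lra.
  pose phi := expR (2 * s ^+ 2 * N%:R).
  have phi1 : 1 <= phi.
    rewrite /phi -[X in X <= _]expR0 ler_expR; apply: mulr_ge0; last exact: ler0n.
    by apply: mulr_ge0 => //; apply: sqr_ge0.
  apply: le_trans (max_ineq q0 q1 s0 phi1 (hmg s s0 s4) nT 0 a) _.
  rewrite /phi -expRM_natr -expRD ler_expR.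
  have -> : s * (0 - a) + 2 * s ^+ 2 * N%:R * nT%:R = - (a ^+ 2 / (8 * K)).
    rewrite /s /K; field.
    by apply/andP; split; apply: lt0r_neq0; rewrite ltr0n.
  rewrite mulNr lerN2.
  rewrite ler_pdivrMr; last by rewrite !mulr_gt0 // ltr0n.
  have -> : a ^+ 2 / (8 * K) * (32 * (nT%:R * eps) * eps) = 4 * (a * eps) ^+ 2 / N%:R.
    rewrite /K; field.
    by apply/andP; split; apply: lt0r_neq0; rewrite ltr0n.
  rewrite ler_pdivlMr; last by rewrite ltr0n.
  rewrite haeps.
  set u := N%:R * theta.
  have h1 : u <= 2 * (u - N%:R * eps) by rewrite /u; nra.
  have h2 : 0 <= u by rewrite /u; apply: mulr_ge0; [apply: ler0n | exact: ltW].
  have h3 : u ^+ 2 <= 4 * (u - N%:R * eps) ^+ 2 by nra.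
  have h4 : theta ^+ 2 * N%:R <= u ^+ 2.
    rewrite /u exprMn; have := sqr_ge0 theta; nra.
  lra.
have hDle : forall i b, - N%:R <= Delta (N:=N) p i b <= N%:R.
  move=> i b; rewrite /Delta.
  have h0 : (#|[pred k | b k == i]|)%:R <= N%:R :> R.
    by rewrite ler_nat; apply: leq_trans (max_card _) _; rewrite card_ord.
  have h0' : 0 <= (#|[pred k | b k == i]|)%:R :> R by apply: ler0n.
  have := hpi1 i; have := hp i => h5 h6.
  apply/andP; split; nra.
apply: (le_trans (union_le
   (E1 := fun i w => [exists m : 'I_nT.+1, a <= 0 + Ssum (Delta (N:=N) p i) w m])
   (E2 := fun i w => [exists m : 'I_nT.+1, a <= 0 + Ssum (fun b => - Delta (N:=N) p i b) w m])
   _ Hdet)).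
  by move=> w; apply: prodr_ge0 => j _; apply: prodr_ge0 => k _; exact: ltW.
apply: (le_trans (y := \sum_(i < M) (B + B))).
  apply: ler_sum => i _; apply: lerD.
    apply: Hev.
      by move=> b; have /andP [] := hDle i b.
    move=> s s0 s4; apply: (mgfN N i hp hp1); lra.
  apply: Hev.
    by move=> b; have /andP [h h'] := hDle i b; lra.
  move=> s s0 s4.
  under eq_bigr do rewrite mulrN -mulNr.
  rewrite -(sqrrN s); apply: (mgfN N i hp hp1); lra.
rewrite sumr_const card_ord -(mulr_natl (B + B) M).
have : 0 <= B by apply: expR_ge0.
lra.
Qed.
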